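(* For any positive integer $m$, any two words of length $m$ that are permutations of $\{1,2,\dots,m\}$ (i.e. each of $1,\dots,m$ occurs exactly once) are cyclic Knuth equivalent.
   Context: A word is a finite sequence of letters from a totally ordered alphabet (here the integers). A transformation of type $K'$ replaces three consecutive letters $yzx$ of a word with $x<y\le z$ by $yxz$. A transformation of type $K''$ replaces three consecutive letters $xzy$ with $x\le y<z$ by $zxy$. An elementary Knuth transformation is a transformation of type $K'$ or $K''$ or the inverse of one of these. The rotation $R$ moves the last letter of a word to the front (e.g. $3346354\mapsto4334635$). An elementary cyclic Knuth transformation is an elementary Knuth transformation or $R$; two words are cyclic Knuth equivalent if one can be obtained from the other by a finite sequence of elementary cyclic Knuth transformations. *)

(* Defs.v *)
From mathcomp Require Import all_boot.
From Stdlib Require Import Relations.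
Set Implicit Arguments. Unset Strict Implicit. Unset Printing Implicit Defensive.

Definition word := seq nat.

Definition K1 (w w' : word) : Prop :=
  exists (u v : word) (x y z : nat),
    x < y <= z /\ w = u ++ [:: y; z; x] ++ v /\ w' = u ++ [:: y; x; z] ++ v.

Definition K2 (w w' : word) : Prop :=
  exists (u v : word) (x y z : nat),
    x <= y < z /\ w = u ++ [:: x; z; y] ++ v /\ w' = u ++ [:: z; x; y] ++ v.

Definition knuth_step (w w' : word) : Prop :=
  K1 w w' \/ K2 w w' \/ K1 w' w \/ K2 w' w.

Definition rotR (w : word) : word :=
  match w with [::] => [::] | a :: s => last a s :: belast a s end.

Definition cyc_knuth_step (w w' : word) : Prop :=
  knuth_step w w' \/ w' = rotR w.

Definition cyc_knuth_equiv (w w' : word) : Prop :=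
  clos_refl_trans word cyc_knuth_step w w'.

(* Main.v *)
Require Import Defs.
From mathcomp Require Import all_boot.
From mathcomp Require Import zify.
From Stdlib Require Import Relations Lia.
Set Implicit Arguments. Unset Strict Implicit. Unset Printing Implicit Defensive.

Notation E := cyc_knuth_equiv.

Lemma rotR_rcons (s : word) e : rotR (rcons s e) = e :: s.
Proof. case: s => [|b s] //=. by rewrite last_rcons belast_rcons. Qed.

Lemma E_rot (t u : word) : E (t ++ u) (u ++ t).
Proof.
elim/last_ind: u t => [|u x IH] t; first by rewrite cats0; apply: rt_refl.
apply: rt_trans (_ : E (x :: t ++ u) _).
  apply: rt_step; right. by rewrite -rcons_cat rotR_rcons.
have := IH (x :: t). by rewrite cat_rcons.
Qed.

Lemma E_sym w w' : E w w' -> E w' w.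
Proof.
elim=> {w w'} [w w' [Hk|->]| w | w1 w2 w3 _ H1 _ H2].
- apply: rt_step; left. case: Hk => [H|[H|[H|H]]]; rewrite /knuth_step; tauto.
- case/lastP: w => [|s e]; first by apply: rt_refl.
  rewrite rotR_rcons -cats1. exact: (E_rot [:: e] s).
- exact: rt_refl.
- exact: rt_trans H2 H1.
Qed.

Definition dstep (w w' : word) : Prop :=
  (exists u v x y z, x < y < z /\ w = u ++ [:: y; x; z] ++ v /\ w' = u ++ [:: y; z; x] ++ v)
  \/ (exists u v x y z, x < y < z /\ w = u ++ [:: z; x; y] ++ v /\ w' = u ++ [:: x; z; y] ++ v)
  \/ (exists s e, w = rcons s e /\ w' = e :: s /\ has (fun c => c < e) s)
  \/ (exists s e, w = e :: s /\ w' = rcons s e /\ has (fun c => c < e) s).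

Definition Dstar := clos_refl_trans word dstep.

Lemma dstep_E w w' : dstep w w' -> cyc_knuth_equiv w w'.
Proof.
case=> [[u [v [x [y [z [H [-> ->]]]]]]]|[[u [v [x [y [z [H [-> ->]]]]]]]|[[s [e [-> [-> _]]]]|[s [e [-> [-> _]]]]]]].
- apply: rt_step; left; right; right; left. exists u, v, x, y, z. split=> //. lia.
- apply: rt_step; left; right; right; right. exists u, v, x, y, z. split=> //. lia.
- apply: rt_step; right. by rewrite rotR_rcons.
- rewrite -cats1. exact: (E_rot [:: e] s).
Qed.

Lemma Dstar_E w w' : Dstar w w' -> cyc_knuth_equiv w w'.
Proof.
elim=> [w1 w2 /dstep_E //| w1|w1 w2 w3 _ H1 _ H2]; first exact: rt_refl.
exact: rt_trans H1 H2.
Qed.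

Lemma dstep_all (P : pred nat) w w' : dstep w w' -> all P w -> all P w'.
Proof.
case=> [[u [v [x [y [z [H [-> ->]]]]]]]|[[u [v [x [y [z [H [-> ->]]]]]]]|[[s [e [-> [-> _]]]]|[s [e [-> [-> _]]]]]]].
- rewrite !all_cat /=. by case: (P x); case: (P y); case: (P z); rewrite ?andbF ?andbT.
- rewrite !all_cat /=. by case: (P x); case: (P y); case: (P z); rewrite ?andbF ?andbT.
- by rewrite all_rcons /=.
- by rewrite all_rcons /=.
Qed.

Lemma split3 (z1 z2 u v : word) x1 x2 x3 :
  z1 ++ z2 = u ++ [:: x1; x2; x3] ++ v ->
  (exists u2, u = z1 ++ u2 /\ z2 = u2 ++ [:: x1; x2; x3] ++ v) \/
  (z1 = rcons u x1 /\ z2 = x2 :: x3 :: v) \/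
  (z1 = u ++ [:: x1; x2] /\ z2 = x3 :: v) \/
  (exists v1, z1 = u ++ [:: x1; x2; x3] ++ v1 /\ v = v1 ++ z2).
Proof.
elim: u z1 => [|b u IH] [|c z1] /=.
- move=> H. left. by exists [::].
- case=> -> {c}. case: z1 => [|c z1] /=; first by move=> ->; right; left.
  case=> -> {c}. case: z1 => [|c z1] /=; first by move=> ->; right; right; left.
  case=> -> {c} <-. right; right; right. by exists z1.
- move=> H. left. by exists (b :: u).
- case=> -> {c} /IH [[u2 [-> ->]]|[[-> ->]|[[-> ->]|[v1 [-> ->]]]]].
  + left. by exists u2.
  + by right; left.
  + by right; right; left.
  + right; right; right. by exists v1.
Qed.

Lemma Dt {x y z} : Dstar x y -> Dstar y z -> Dstar x z.
Proof. exact: rt_trans. Qed.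

Lemma dK1 u v x y z : x < y < z ->
  Dstar (u ++ [:: y; x; z] ++ v) (u ++ [:: y; z; x] ++ v).
Proof. move=> H; apply: rt_step; left. by exists u, v, x, y, z. Qed.

Lemma dK2 u v x y z : x < y < z ->
  Dstar (u ++ [:: z; x; y] ++ v) (u ++ [:: x; z; y] ++ v).
Proof. move=> H; apply: rt_step; right; left. by exists u, v, x, y, z. Qed.

Lemma rotL_block a (p q : word) : (forall c, c \in p -> a < c) -> a \in q ->
  Dstar (p ++ q) (q ++ p).
Proof.
elim: p q => [|c p IH] q Hp Hq /=; first by rewrite cats0; apply: rt_refl.
apply: Dt (_ : Dstar (p ++ rcons q c) _).
  apply: rt_step; right; right; right. exists (p ++ q), c. split=> //.
  split; first by rewrite rcons_cat.
  apply/hasP. exists a; first by rewrite mem_cat Hq orbT.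
  apply: Hp. by rewrite inE eqxx.
rewrite -cat_rcons. apply: IH.
  by move=> d Hd; apply: Hp; rewrite inE Hd orbT.
by rewrite mem_rcons inE Hq orbT.
Qed.

Lemma rotR_block a (p q : word) : (forall c, c \in q -> a < c) -> a \in p ->
  Dstar (p ++ q) (q ++ p).
Proof.
elim/last_ind: q p => [|q c IH] p Hq Hp /=; first by rewrite cats0; apply: rt_refl.
apply: Dt (_ : Dstar ((c :: p) ++ q) _).
  apply: rt_step; right; right; left. exists (p ++ q), c. split.
    by rewrite rcons_cat.
  split=> //.
  apply/hasP. exists a; first by rewrite mem_cat Hp.
  apply: Hq. by rewrite mem_rcons inE eqxx.
rewrite cat_rcons. apply: IH.
  by move=> d Hd; apply: Hq; rewrite mem_rcons inE Hd orbT.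
by rewrite inE Hp orbT.
Qed.

Lemma lift_knuth a x1 x2 x3 T' u v z1 z2 :
  a < x2 < x1 -> x2 < x3 ->
  (forall u v, Dstar (u ++ [:: x1; x2; x3] ++ v) (u ++ T' ++ v)) ->
  z1 ++ z2 = u ++ [:: x1; x2; x3] ++ v ->
  exists z1' z2', u ++ T' ++ v = z1' ++ z2' /\ Dstar (z1 ++ a :: z2) (z1' ++ a :: z2').
Proof.
move=> H1 H2 M /split3 [[u2 [-> ->]]|[[-> ->]|[[-> ->]|[v1 [-> ->]]]]].
- exists z1, (u2 ++ T' ++ v). split; first by rewrite -catA.
  have := M (z1 ++ a :: u2) v. by rewrite -!catA.
- exists u, (T' ++ v). split=> //.
  apply: Dt (_ : Dstar (u ++ [:: a; x1; x2] ++ x3 :: v) _).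
    have := @dK2 u (x3 :: v) a x2 x1. rewrite cat_rcons. apply. lia.
  have := M (rcons u a) v. by rewrite !cat_rcons.
- exists (u ++ T'), v. split; first by rewrite catA.
  apply: Dt (_ : Dstar (rcons u x1 ++ [:: x2; x3; a] ++ v) _).
    have := @dK1 (rcons u x1) v a x2 x3. rewrite cat_rcons -catA. apply. lia.
  have := M u (a :: v). by rewrite cat_rcons -!catA.
- exists (u ++ T' ++ v1), z2. split; first by rewrite !catA.
  have := M u (v1 ++ a :: z2). by rewrite -!catA.
Qed.

Lemma lift_step a z z' z1 z2 : dstep z z' -> all (fun c => a < c) z ->
  z = z1 ++ z2 ->
  exists z1' z2', z' = z1' ++ z2' /\ Dstar (z1 ++ a :: z2) (z1' ++ a :: z2').
Proof.
move=> Hs /allP Hall Hz.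
case: Hs => [[u [v [x [y [zz [H [Ez ->]]]]]]]|[[u [v [x [y [zz [H [Ez ->]]]]]]]|[[s [e [Ez [-> _]]]]|[s [e [Ez [-> _]]]]]]].
- have Hax : a < x by apply: Hall; rewrite Ez !mem_cat !inE eqxx !orbT.
  apply: (lift_knuth (x1 := y) (x2 := x) (x3 := zz)); first by lia. by lia.
    by move=> u1 v1; apply: dK1.
  by rewrite -Hz Ez.
- have Hax : a < x by apply: Hall; rewrite Ez !mem_cat !inE eqxx !orbT.
  apply: (lift_knuth (x1 := zz) (x2 := x) (x3 := y)); first by lia. by lia.
    by move=> u1 v1; apply: dK2.
  by rewrite -Hz Ez.
- have Hs : forall c, c \in s -> a < c.
    by move=> c Hc; apply: Hall; rewrite Ez mem_rcons inE Hc orbT.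
  have Hae : a < e by apply: Hall; rewrite Ez mem_rcons inE eqxx.
  move: Hz; rewrite Ez. case/lastP: z2 => [|z2 e'].
    rewrite cats0 => <-. exists [:: e], s. split=> //.
    have := @rotL_block a s [:: e; a] Hs. rewrite cat_rcons /=. apply.
    by rewrite !inE eqxx orbT.
  rewrite -rcons_cat => /rcons_inj [-> <-].
  exists (e :: z1), z2. split=> //.
  apply: rt_step; right; right; left. exists (z1 ++ a :: z2), e.
  split; first by rewrite rcons_cat.
  split=> //. apply/hasP. exists a=> //. by rewrite mem_cat inE eqxx orbT.
- have Hs : forall c, c \in s -> a < c.
    by move=> c Hc; apply: Hall; rewrite Ez inE Hc orbT.
  have Hae : a < e by apply: Hall; rewrite Ez inE eqxx.
  move: Hz; rewrite Ez. case: z1 => [|c z1] /=.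
    move=> <-. exists s, [:: e]. split; first by rewrite cats1.
    have := @rotR_block a [:: a; e] s Hs. apply. by rewrite inE eqxx.
  move=> [<- ->]. exists z1, (rcons z2 e). split; first by rewrite rcons_cat.
  apply: rt_step; right; right; right. exists (z1 ++ a :: z2), e.
  split=> //. split; first by rewrite rcons_cat.
  apply/hasP. exists a=> //. by rewrite mem_cat inE eqxx orbT.
Qed.

Lemma lift_star a z z' : Dstar z z' -> all (fun c => a < c) z ->
  forall z1 z2, z = z1 ++ z2 ->
  exists z1' z2', z' = z1' ++ z2' /\ Dstar (z1 ++ a :: z2) (z1' ++ a :: z2').
Proof.
move/clos_rt_rt1n_iff. elim=> {z z'} [z|x y z Hxy _ IH] Hall z1 z2 Hz.
  exists z1, z2. split=> //. exact: rt_refl.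
have [z1' [z2' [Ey D1]]] := lift_step Hxy Hall Hz.
have [z1'' [z2'' [Ez D2]]] := IH (dstep_all Hxy Hall) _ _ Ey.
exists z1'', z2''. split=> //. exact: Dt D1 D2.
Qed.

Lemma slot_right a x p y : a < p -> path ltn p y ->
  Dstar (x ++ p :: a :: y) (x ++ p :: y ++ [:: a]).
Proof.
elim: y x p => [|c y IH] x p Hap /=; first by move=> _; apply: rt_refl.
case/andP=> Hpc Hy.
apply: Dt (_ : Dstar (x ++ [:: p; c; a] ++ y) _).
  apply: dK1. lia.
have := IH (rcons x p) c ltac:(lia) Hy. by rewrite !cat_rcons.
Qed.

Lemma main_iota n : forall k w, perm_eq w (iota k n) -> Dstar w (iota k n).
Proof.
elim: n => [|n IH] k w Hp.
  have := perm_size Hp. rewrite size_iota => /size0nil ->. exact: rt_refl.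
have Hin : k \in w by rewrite (perm_mem Hp) /= inE eqxx.
move: Hp. case/splitPr: Hin => z1 z2 Hp.
have Hp' : perm_eq (z1 ++ z2) (iota k.+1 n).
  move: Hp. by rewrite (perm_catCA z1 [:: k] z2) /= perm_cons.
have Hall : all (fun c => k < c) (z1 ++ z2).
  apply/allP => c. rewrite (perm_mem Hp') mem_iota. lia.
have [z1' [z2' [Ei D]]] := lift_star (IH _ _ Hp') Hall (erefl _).
apply: Dt D _.
have Hsort := iota_ltn_sorted k.+1 n.
have Hmem : forall c, c \in iota k.+1 n -> k < c by move=> c; rewrite mem_iota; lia.
case/lastP: z1' Ei => [|x p] Ei; first by rewrite /= Ei; apply: rt_refl.
rewrite cat_rcons in Ei. rewrite cat_rcons.
rewrite Ei sorted_cat_cons in Hsort. case/andP: Hsort => _ Hpath.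
have Hkp : k < p by apply: Hmem; rewrite Ei mem_cat inE eqxx orbT.
apply: (Dt (slot_right x Hkp Hpath)).
have := @rotL_block k (x ++ p :: z2') [:: k]. rewrite -catA /= -Ei /=. apply.
  exact: Hmem.
by rewrite inE eqxx.
Qed.

Theorem mainTheorem10 (m : nat) (w w' : word) :
  0 < m ->
  perm_eq w (iota 1 m) -> perm_eq w' (iota 1 m) ->
  cyc_knuth_equiv w w'.
Proof.
move=> _ Hw Hw'.
exact: (rt_trans _ _ _ _ _ (Dstar_E (main_iota Hw)) (E_sym (Dstar_E (main_iota Hw')))).
Qed.
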